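(* Let $n$ be a positive integer and assume hypothesis $(\star)$ for $\mathbb{R}^n$: for every family $\mathcal{F}$ of closed Lebesgue-null subsets of $\mathbb{R}^n$ with $|\mathcal{F}|<\mathfrak{c}$ and every Lebesgue-null set $N\subset\mathbb{R}^n$, one has $N\cup\bigcup\mathcal{F}\neq\mathbb{R}^n$ (e.g. under the Continuum Hypothesis). Then there exists a set $A\subset\mathbb{R}^n$ that is not Lebesgue null (hence $\dim_H A=n$) such that no subset of $A$ can be mapped onto a non-degenerate closed interval by a uniformly continuous map.
   Context: $\mathfrak{c}$ denotes the cardinality of the continuum; $\dim_H$ denotes Hausdorff dimension. *)

(* Defs.v *)
From mathcomp Require Import all_boot.
From Stdlib Require Import Reals.
Set Implicit Arguments.
Unset Strict Implicit.
Unset Printing Implicit Defensive.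

Definition Rn (n : nat) : Type := 'I_n -> R.

Definition edist (n : nat) (x y : Rn n) : R :=
  sqrt (\big[Rplus/0%R]_(i < n) ((x i - y i) * (x i - y i))%R).

Definition is_open (n : nat) (U : Rn n -> Prop) : Prop :=
  forall x, U x -> exists d : R, (0 < d)%R /\ forall y, (edist x y < d)%R -> U y.
Definition is_closed (n : nat) (C : Rn n -> Prop) : Prop :=
  is_open (fun x => ~ C x).

Definition box_vol (n : nat) (a b : Rn n) : R :=
  \big[Rmult/1%R]_(i < n) (b i - a i)%R.

Definition lebesgue_null (n : nat) (N : Rn n -> Prop) : Prop :=
  forall eps : R, (0 < eps)%R ->
    exists a b : nat -> Rn n,
      (forall k i, (a k i <= b k i)%R) /\
      (forall x, N x -> exists k, forall i, (a k i <= x i <= b k i)%R) /\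
      (forall m, (sum_f_R0 (fun k => box_vol (a k) (b k)) m <= eps)%R).

(* |F| < c : F injects into R but R does not inject into F. *)
Definition card_lt_continuum (T : Type) (F : T -> Prop) : Prop :=
  (exists g : {X : T | F X} -> R, forall u v, g u = g v -> u = v) /\
  ~ (exists h : R -> {X : T | F X}, forall s t, h s = h t -> s = t).

Definition hyp_star (n : nat) : Prop :=
  forall (F : (Rn n -> Prop) -> Prop),
    (forall X, F X -> is_closed X /\ lebesgue_null X) ->
    card_lt_continuum F ->
    forall N : Rn n -> Prop, lebesgue_null N ->
      exists x : Rn n, ~ N x /\ ~ (exists X, F X /\ X x).

Definition unif_cont_on (n : nat) (S : Rn n -> Prop) (f : Rn n -> R) : Prop :=
  forall eps : R, (0 < eps)%R -> exists d : R, (0 < d)%R /\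
    forall x y, S x -> S y -> (edist x y < d)%R -> (Rabs (f x - f y) < eps)%R.

Definition maps_onto_interval (n : nat) (S : Rn n -> Prop) (f : Rn n -> R) (c d : R) : Prop :=
  (forall x, S x -> (c <= f x <= d)%R) /\
  (forall y, (c <= y <= d)%R -> exists x, S x /\ f x = y).

(* Main.v *)
From HB Require Import structures.
Require Import Defs.
From mathcomp Require Import all_boot.
From Stdlib Require Import Reals.
From mathcomp Require Import boolp wochoice zify.
From Stdlib Require Import Lra Lia ZArith ClassicalEpsilon ProofIrrelevance Classical FunctionalExtensionality.
Set Implicit Arguments.
Unset Strict Implicit.
Unset Printing Implicit Defensive.

HB.instance Definition _ := hasDecEq.Build R (compareP Req_dec_T).

Local Open Scope R_scope.
From HB Require Import structures.
Require Import Defs.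
From mathcomp Require Import all_boot.
From Stdlib Require Import Reals.
From mathcomp Require Import boolp wochoice.
From Stdlib Require Import Lra Lia ClassicalEpsilon ProofIrrelevance Classical.
Set Implicit Arguments.
Unset Strict Implicit.
Unset Printing Implicit Defensive.

HB.instance Definition _ := hasDecEq.Build R (compareP Req_dec_T).

Local Open Scope R_scope.

Definition injR (h : R -> R) := forall r s, h r = h s -> r = s.
Definition small (X : R -> Prop) := ~ exists h, injR h /\ forall r, X (h r).

Lemma small_sub (X Y : R -> Prop) : (forall r, X r -> Y r) -> small Y -> small X.
Proof. intros HXY HY [h [hi hX]]. apply HY. exists h. split; auto. Qed.

Lemma small_add1 (X : R -> Prop) p : small X -> small (fun r => X r \/ r = p).
Proof.
intros Hs [h [hi hX]]. apply Hs.
destruct (Classical_Prop.classic (exists r0, h r0 = p)) as [[r0 Hr0]|Hn].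
- exists (fun r => h (r0 + exp r)). split.
  + intros r s E. apply hi in E. apply exp_inv. lra.
  + intro r. destruct (hX (r0 + exp r)) as [H|H]; auto. exfalso.
    rewrite <- Hr0 in H. apply hi in H. pose proof (exp_pos r). lra.
- exists h. split; auto. intro r. destruct (hX r) as [H|H]; auto.
  exfalso; apply Hn; eauto.
Qed.

Section WO.
Variables (T : eqType) (W : rel T).
Hypothesis wo : well_order W.

Lemma wo_min (P : T -> Prop) : (exists x, P x) -> exists z, P z /\ forall x, P x -> W z x.
Proof.
intros [x Px].
have ne : nonempty [pred y | `[< P y >]].
  by exists x; rewrite inE; apply/asboolP.
case: (wo ne) => z [[Hz Hlb] _].
exists z. split. by move: Hz; rewrite inE => /asboolP.
move=> y Py; apply: Hlb. by rewrite inE; apply/asboolP.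
Qed.

Lemma wo_total x y : W x y \/ W y x.
Proof.
have [z [Hz Hmin]] := @wo_min (fun z => z = x \/ z = y) (ex_intro _ x (or_introl erefl)).
case: Hz => Hz; subst z; [left|right]; apply: Hmin; auto.
Qed.

Lemma wo_refl x : W x x.
Proof. by case: (wo_total x x). Qed.

Lemma wo_anti x y : W x y -> W y x -> x = y.
Proof.
move=> Hxy Hyx.
have ne : nonempty [pred z | (z == x) || (z == y)].
  by exists x; rewrite inE eqxx.
case: (wo ne) => z [_ Hu].
have hx : minimum_of W [pred z | (z == x) || (z == y)] x.
  split; first by rewrite inE eqxx.
  move=> w; rewrite inE => /orP[/eqP->|/eqP->] //; exact: wo_refl.
have hy : minimum_of W [pred z | (z == x) || (z == y)] y.
  split; first by rewrite inE eqxx orbT.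
  move=> w; rewrite inE => /orP[/eqP->|/eqP->] //; exact: wo_refl.
by rewrite -(Hu _ hx) -(Hu _ hy).
Qed.
End WO.

Lemma index_exists : exists (I : R -> Prop) (lt : R -> R -> Prop),
  ~ small I /\ (forall a, I a -> small (fun b => lt b a)) /\
  (forall b, I b -> small (fun a => ~ lt b a)).
Proof.
case: (well_ordering_principle R) => W wo.
pose seg a := fun b => W b a /\ b <> a.
have key : forall b, small (seg b) -> small (fun a => ~ seg a b).
  move=> b Hb. apply: (@small_sub _ _ _ (@small_add1 _ b Hb)).
  move=> a Ha. case: (Req_dec_T a b) => [->|Hne]; [by right|left].
  split=> //. case: (wo_total wo a b) => // Hba. exfalso; apply: Ha. split=> //. auto.
case: (Classical_Prop.classic (exists a, ~ small (seg a))) => [Hex|Hn].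
- have [a0 [Ha0 Hmin]] := wo_min wo Hex.
  exists (seg a0), (fun b a => seg a b). split=> //. split.
  + move=> a [Wa Hne]. apply: NNPP => Hp. apply: Hne. apply: (wo_anti wo Wa). exact: (Hmin _ Hp).
  + move=> b [Wb Hne]. apply: key. apply: NNPP => Hp. apply: Hne. apply: (wo_anti wo Wb). exact: (Hmin _ Hp).
- exists (fun _ => True), (fun b a => seg a b). split.
  + move=> Hs. apply: Hs. exists id. split=> //.
  + split=> a _; [|apply: key]; apply: NNPP => Hp; apply: Hn; eauto.
Qed.
Definition qseq (k : nat) : R :=
  match @unpickle (nat * nat * nat)%type k with
  | Some (a, b, m) => (INR a - INR b) / INR (m.+1)
  | None => 0
  end.

Lemma IZR_nat_diff (z : Z) : exists a b : nat, IZR z = INR a - INR b.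
Proof.
destruct (Z_le_gt_dec 0 z) as [H|H].
- exists (Z.to_nat z), 0%nat. rewrite (INR_IZR_INZ (Z.to_nat z)) Z2Nat.id /=; [lra|lia].
- exists 0%nat, (Z.to_nat (- z)). rewrite (INR_IZR_INZ (Z.to_nat (- z))) Z2Nat.id; last lia.
  rewrite opp_IZR /=. lra.
Qed.

Lemma qseq_dense x y : x < y -> exists k, x < qseq k < y.
Proof.
move=> Hxy.
have [Hu1 Hu2] := archimed (/ (y - x)).
set m := Z.to_nat (up (/ (y - x))).
have Hm : / (y - x) < INR m.+1.
  rewrite S_INR /m. destruct (Z_le_gt_dec 0 (up (/ (y - x)))) as [H|H].
  + rewrite INR_IZR_INZ Z2Nat.id //. lra.
  + have : IZR (up (/ (y - x))) <= 0 by apply: IZR_le; lia.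
    have := pos_INR (Z.to_nat (up (/ (y - x)))). have : 0 < / (y - x) by apply: Rinv_0_lt_compat; lra.
    lra.
have HM : 0 < INR m.+1 by apply: lt_0_INR; lia.
have H1 : 1 < (y - x) * INR m.+1.
  have := Rmult_lt_compat_l (y - x) _ _ ltac:(lra) Hm.
  rewrite Rinv_r; lra.
have [Hz1 Hz2] := archimed (x * INR m.+1).
have [a [b Hab]] := IZR_nat_diff (up (x * INR m.+1)).
exists (pickle (a, b, m)). rewrite /qseq pickleK -Hab.
split.
- apply: (Rmult_lt_reg_r (INR m.+1)) => //. rewrite /Rdiv Rmult_assoc Rinv_l; lra.
- apply: (Rmult_lt_reg_r (INR m.+1)) => //. rewrite /Rdiv Rmult_assoc Rinv_l; lra.
Qed.

Definition iota_R (x : R) : nat -> bool :=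
  fun k => if Rlt_dec (qseq k) x then true else false.

Lemma iota_R_inj x y : iota_R x = iota_R y -> x = y.
Proof.
move=> E. destruct (Rtotal_order x y) as [H|[H|H]] => //.
- have [k [Hk1 Hk2]] := qseq_dense H.
  have := f_equal (fun g => g k) E. rewrite /iota_R.
  case: (Rlt_dec (qseq k) x) => ?; case: (Rlt_dec (qseq k) y) => ? //; lra.
- have [k [Hk1 Hk2]] := qseq_dense H.
  have := f_equal (fun g => g k) E. rewrite /iota_R.
  case: (Rlt_dec (qseq k) x) => ?; case: (Rlt_dec (qseq k) y) => ? //; lra.
Qed.

Fixpoint ps (b : nat -> bool) (m : nat) : R :=
  match m with
  | O => 0
  | S m' => ps b m' + (if b m' then / 3 ^ m else 0)
  end.

Lemma pow3_pos k : 0 < 3 ^ k.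
Proof. apply: pow_lt; lra. Qed.

Lemma inv3S k : / (3 * 3 ^ k) = / 3 ^ k / 3.
Proof. rewrite /= Rinv_mult /Rdiv Rmult_comm //. Qed.

Lemma ps_tail b j t : ps b j <= ps b (j + t) <= ps b j + (/ 3 ^ j - / 3 ^ (j + t)) / 2.
Proof.
elim: t => [|t IH]. rewrite addn0. lra.
rewrite addnS /=. have := inv3S (j + t)%nat. have := Rinv_0_lt_compat _ (pow3_pos (j + t)%nat).
case: (b (j + t)%nat); lra.
Qed.

Lemma ps_le_half b m : ps b m <= / 2.
Proof.
have := ps_tail b 0 m. rewrite add0n /= . have := Rinv_0_lt_compat _ (pow3_pos m). lra.
Qed.

Lemma ps_bound b : bound (fun r => exists m, r = ps b m).
Proof. exists (/ 2). move=> r [m ->]. apply: ps_le_half. Qed.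
Lemma ps_ne b : exists x, (fun r => exists m, r = ps b m) x.
Proof. exists 0, 0%nat. done. Qed.
Definition kappa (b : nat -> bool) : R :=
  proj1_sig (completeness _ (ps_bound b) (ps_ne b)).

Lemma kappa_spec b : is_lub (fun r => exists m, r = ps b m) (kappa b).
Proof. rewrite /kappa. by case: completeness. Qed.

Lemma ps_prefix b b' k : (forall j, (j < k)%nat -> b j = b' j) -> ps b k = ps b' k.
Proof.
elim: k => [|k IH] H //=. rewrite IH; last by move=> j Hj; apply: H; apply: ltnW.
by rewrite H.
Qed.

Lemma kappa_lt b b' k : (forall j, (j < k)%nat -> b j = b' j) -> b k = false -> b' k = true ->
  kappa b < kappa b'.
Proof.
move=> Hp Hb Hb'.
have E := ps_prefix Hp.
have h3 := Rinv_0_lt_compat _ (pow3_pos k.+1).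
have e3 : / 3 ^ k.+1 = / (3 * 3 ^ k) by [].
have Hup : is_upper_bound (fun r => exists m, r = ps b m) (ps b k + / 3 ^ k.+1 / 2).
  move=> r [m ->]. case: (leqP m k) => Hm.
  - have := ps_tail b m (k - m)%nat. rewrite subnKC //. lra.
  - have := ps_tail b k.+1 (m - k.+1)%nat. rewrite subnKC //=. rewrite Hb.
    have := Rinv_0_lt_compat _ (pow3_pos m). lra.
have [_ H1] := kappa_spec b.
have [H2 _] := kappa_spec b'.
have := H1 _ Hup. have := H2 (ps b' k.+1) (ex_intro _ k.+1 erefl).
rewrite /= Hb' E. lra.
Qed.

Lemma kappa_inj b b' : kappa b = kappa b' -> b = b'.
Proof.
move=> E. apply: NNPP => Hne.
have Hex : exists k, b k != b' k.
  apply: NNPP => Hn. apply: Hne. apply: functional_extensionality => k.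
  apply/eqP. apply: negbNE. apply/negP => H. apply: Hn. by exists k.
case: (ex_minnP Hex) => k Hk Hmin.
have Hp : forall j, (j < k)%nat -> b j = b' j.
  move=> j Hj. apply/eqP. apply: negbNE. apply/negP => H.
  have := Hmin j H. rewrite leqNgt Hj //.
move: Hk. case Eb: (b k); case Eb': (b' k) => // _.
- have := kappa_lt (fun j Hj => esym (Hp j Hj)) Eb' Eb. lra.
- have := kappa_lt Hp Eb Eb'. lra.
Qed.
Definition Rof (b : nat -> bool) : R :=
  match excluded_middle_informative (exists r, iota_R r = b) with
  | left H => proj1_sig (constructive_indefinite_description _ H)
  | right _ => 0
  end.

Lemma Rof_iota r : Rof (iota_R r) = r.
Proof.
rewrite /Rof. case: excluded_middle_informative => [H|H]; last by exfalso; apply: H; eauto.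
case: constructive_indefinite_description => /= s Hs. exact: iota_R_inj.
Qed.

Definition dataOf (c : nat -> bool) : nat -> R :=
  fun j => Rof (fun t => c (pickle (j, t))).

Lemma dataOf_surj (d : nat -> R) : exists c, dataOf c = d.
Proof.
exists (fun p => match @unpickle (nat * nat)%type p with
                 | Some (j, t) => iota_R (d j) t | None => false end).
apply: functional_extensionality => j. rewrite /dataOf.
under [fun t => _]functional_extensionality => t do rewrite pickleK.
by rewrite Rof_iota.
Qed.

Definition decode_nat (x : R) : nat :=
  match excluded_middle_informative (exists k, INR k = x) with
  | left H => proj1_sig (constructive_indefinite_description _ H)
  | right _ => 0%nat
  end.

Lemma decode_natK k : decode_nat (INR k) = k.
Proof.
rewrite /decode_nat. case: excluded_middle_informative => [H|H]; last by exfalso; apply: H; eauto.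
case: constructive_indefinite_description => /= s Hs. exact: INR_eq.
Qed.

Section Data.
Variable n : nat.

Definition da (d : nat -> R) (m k : nat) : Rn n := fun i => d (pickle (0%nat, m, k, nat_of_ord i)).
Definition db (d : nat -> R) (m k : nat) : Rn n := fun i => d (pickle (1%nat, m, k, nat_of_ord i)).
Definition dK (d : nat -> R) (m : nat) : nat := decode_nat (d (pickle (2%nat, m, 0%nat, 0%nat))).

Lemma data_surj (a b : nat -> nat -> Rn n) (K : nat -> nat) :
  exists c, (forall m k, da (dataOf c) m k = a m k) /\ (forall m k, db (dataOf c) m k = b m k)
         /\ (forall m, dK (dataOf c) m = K m).
Proof.
pose d j := match @unpickle (nat * nat * nat * nat)%type j with
            | Some (t, m, k, i) =>
                if t == 0%nat then (match @insub _ (fun i => (i < n)%nat) 'I_n i with Some i' => a m k i' | None => 0 end)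
                else if t == 1%nat then (match @insub _ (fun i => (i < n)%nat) 'I_n i with Some i' => b m k i' | None => 0 end)
                else INR (K m)
            | None => 0 end.
have [c Hc] := dataOf_surj d.
exists c. rewrite Hc /da /db /dK /d. split; [|split].
- move=> m k. apply: functional_extensionality => i. by rewrite pickleK /= valK.
- move=> m k. apply: functional_extensionality => i. by rewrite pickleK /= valK.
- move=> m. by rewrite pickleK /= decode_natK.
Qed.

Definition inbox (lo hi x : Rn n) := forall i, lo i <= x i <= hi i.
Definition Craw (d : nat -> R) : Rn n -> Prop :=
  fun x => forall m, exists k, (k < dK d m)%nat /\ inbox (da d m k) (db d m k) x.
Definition Nraw (d : nat -> R) : Rn n -> Prop :=
  fun x => forall m, exists k, inbox (da d m k) (db d m k) x.
Definition Cs (c : nat -> bool) : Rn n -> Prop :=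
  fun x => lebesgue_null (Craw (dataOf c)) /\ Craw (dataOf c) x.
Definition Ns (c : nat -> bool) : Rn n -> Prop :=
  fun x => lebesgue_null (Nraw (dataOf c)) /\ Nraw (dataOf c) x.
End Data.
Lemma Rplus_assoc' : associative Rplus. Proof. move=> *; ring. Qed.
Lemma Rmult_assoc' : associative Rmult. Proof. move=> *; ring. Qed.
HB.instance Definition _ := Monoid.isComLaw.Build R 0 Rplus Rplus_assoc' Rplus_comm Rplus_0_l.
HB.instance Definition _ := Monoid.isComLaw.Build R 1 Rmult Rmult_assoc' Rmult_comm Rmult_1_l.

Notation "\rsum_ ( i < m ) F" := (\big[Rplus/0]_(i < m) F) (at level 41, F at level 41, i, m at level 50).

Lemma rsum_le m (F G : 'I_m -> R) : (forall i, F i <= G i) -> \rsum_(i < m) F i <= \rsum_(i < m) G i.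
Proof.
move=> H. apply: (big_ind2 (fun a b => a <= b)); [lra| |done].
move=> ? ? ? ? ? ?; lra.
Qed.

Lemma rsum_ge0 m (F : 'I_m -> R) : (forall i, 0 <= F i) -> 0 <= \rsum_(i < m) F i.
Proof. move=> H. apply: (big_ind (fun a => 0 <= a)); [lra| |done]. move=> ? ? ? ?; lra. Qed.

Lemma rsum_const_le m (F : 'I_m -> R) c : (forall i, F i <= c) -> \rsum_(i < m) F i <= INR m * c.
Proof.
elim: m F => [|m IH] F H. rewrite big_ord0 /=. lra.
rewrite big_ord_recr S_INR Rmult_plus_distr_r Rmult_1_l. have := IH (fun i => F (widen_ord (leqnSn m) i)) (fun i => H _).
have := H ord_max. simpl. lra.
Qed.

Lemma sqrt_sumsq_le m (F : 'I_m -> R) :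
  sqrt (\rsum_(i < m) (F i * F i)) <= \rsum_(i < m) Rabs (F i).
Proof.
have Hg : forall k (G : 'I_k -> R), 0 <= \rsum_(i < k) (G i * G i).
  move=> k G. apply: rsum_ge0 => i. apply: Rle_0_sqr.
have Ha : forall k (G : 'I_k -> R), 0 <= \rsum_(i < k) Rabs (G i).
  move=> k G. apply: rsum_ge0 => i. apply: Rabs_pos.
apply: Rsqr_incr_0; rewrite ?Rsqr_sqrt //; try apply: sqrt_pos.
elim: m F => [|m IH] F. rewrite !big_ord0 /Rsqr. lra.
rewrite !big_ord_recr /=. simpl.
have := IH (fun i => F (widen_ord (leqnSn m) i)). rewrite /Rsqr.
have := Ha _ (fun i => F (widen_ord (leqnSn m) i)). have := Rabs_pos (F ord_max).
have := Rsqr_abs (F ord_max). rewrite /Rsqr.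
move: (\big[Rplus/0]_(i < m) Rabs (F (widen_ord (leqnSn m) i))) => A.
move: (\big[Rplus/0]_(i < m) (F (widen_ord (leqnSn m) i) * F (widen_ord (leqnSn m) i))) => S.
move: (F ord_max) => f. move=> E1 H1 H2 H3.
have : 0 <= A * Rabs f by apply: Rmult_le_pos.
have E2 : (A + Rabs f) * (A + Rabs f) = A * A + 2 * (A * Rabs f) + Rabs f * Rabs f by ring.
move=> H4. rewrite E2 E1. lra.
Qed.

Lemma rsum_single m (F : 'I_m -> R) i : (forall j, 0 <= F j) -> F i <= \rsum_(j < m) F j.
Proof.
move=> H. rewrite (bigD1 i) //=. simpl.
set s := \big[_/_]_(j < m | _) _.
have : 0 <= s.
  apply: (big_ind (fun a => 0 <= a)); [lra| |move=> j _; done]. move=> ? ? ? ?; lra.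
lra.
Qed.

Section Geo.
Variable n : nat.
Implicit Types x y : Rn n.

Lemma coord_le_edist x y i : Rabs (x i - y i) <= edist x y.
Proof.
rewrite /edist. rewrite -(sqrt_Rsqr (Rabs (x i - y i))); last by apply: Rabs_pos.
apply: sqrt_le_1_alt. rewrite -Rsqr_abs /Rsqr.
have := @rsum_single n (fun j => (x j - y j) * (x j - y j)) i (fun j => Rle_0_sqr _). exact.
Qed.

Lemma edist_le_const x y c : (forall i, Rabs (x i - y i) <= c) -> edist x y <= INR n * c.
Proof.
move=> H. apply: Rle_trans (sqrt_sumsq_le (fun i => x i - y i)) _.
exact: rsum_const_le.
Qed.

Lemma edist_sym x y : edist x y = edist y x.
Proof. rewrite /edist. congr sqrt. apply: eq_bigr => i _. ring. Qed.

Lemma closed_empty : is_closed (fun _ : Rn n => False).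
Proof. move=> x _. exists 1. split; [lra|auto]. Qed.

Lemma closed_ext (X Y : Rn n -> Prop) : (forall x, X x <-> Y x) -> is_closed X -> is_closed Y.
Proof.
move=> E H x Hx. have Hx' : ~ X x by rewrite E.
have [d [Hd Hb]] := H x Hx'. exists d. split=> // y Hy. rewrite -E. exact: Hb.
Qed.

Lemma finite_min (K : nat) (P : nat -> R -> Prop) :
  (forall k d d', P k d -> 0 < d' <= d -> P k d') ->
  (forall k, (k < K)%nat -> exists d, 0 < d /\ P k d) ->
  exists d, 0 < d /\ forall k, (k < K)%nat -> P k d.
Proof.
move=> Hm. elim: K => [|K IH] H. exists 1. split=> //; lra.
have [d1 [H1 H1']] := IH (fun k Hk => H k (ltnW Hk)).
have [d2 [H2 H2']] := H K (ltnSn K).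
exists (Rmin d1 d2). split. by apply: Rmin_pos.
move=> k Hk. rewrite ltnS leq_eqVlt in Hk. case/orP: Hk => [/eqP->|Hk].
- apply: Hm H2' _. split. by apply: Rmin_pos. apply: Rmin_r.
- apply: Hm (H1' k Hk) _. split. by apply: Rmin_pos. apply: Rmin_l.
Qed.

Lemma closed_Craw (d : nat -> R) : is_closed (@Craw n d).
Proof.
move=> x Hx. have [m Hm] := not_all_ex_not _ _ Hx.
have Hk : forall k, (k < dK d m)%nat -> ~ inbox (@da n d m k) (@db n d m k) x.
  move=> k Hk Hb. apply: Hm. by exists k.
pose P k del := forall y, edist x y < del -> ~ inbox (@da n d m k) (@db n d m k) y.
have HP1 : forall k d1 d2, P k d1 -> 0 < d2 <= d1 -> P k d2.
  move=> k d1 d2 H [H1 H2] y Hy. apply: H. lra.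
have HP2 : forall k, (k < dK d m)%nat -> exists del, 0 < del /\ P k del.
  move=> k Hk1. have Hnb := Hk k Hk1.
  have [i Hi] := not_all_ex_not _ _ Hnb.
  case: (Rle_dec (@da n d m k i) (x i)) => H1.
  + have H2 : @db n d m k i < x i by apply: Rnot_le_lt => H2; apply: Hi; split.
    exists (x i - @db n d m k i). split. lra. move=> y Hy Hb.
    have := coord_le_edist x y i. have := Hb i.
    have := Rle_abs (x i - y i). lra.
  + exists (@da n d m k i - x i). split. lra. move=> y Hy Hb.
    have := coord_le_edist x y i. have := Hb i.
    have := Rle_abs (- (x i - y i)). rewrite Rabs_Ropp. lra.
have [del [Hdel Hdel']] := finite_min HP1 HP2.
exists del. split=> // y Hy Hc. have [k [Hk1 Hk2]] := Hc m. exact: Hdel' Hk1 y Hy Hk2.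
Qed.

Lemma closed_Cs c : is_closed (@Cs n c).
Proof.
case: (Classical_Prop.classic (lebesgue_null (@Craw n (dataOf c)))) => H.
- eapply closed_ext; last exact: (@closed_Craw (dataOf c)). move=> x /=. rewrite /Cs. tauto.
- eapply closed_ext; last exact: closed_empty. move=> x /=. rewrite /Cs. tauto.
Qed.

Lemma closed_preimage (phi : Rn n -> Rn n) (X : Rn n -> Prop) :
  (forall x y, edist (phi x) (phi y) <= edist x y) -> is_closed X -> is_closed (fun x => X (phi x)).
Proof.
move=> Hl H x Hx. have [d [Hd Hb]] := H (phi x) Hx. exists d. split=> // y Hy.
apply: Hb. have := Hl x y. lra.
Qed.
End Geo.
Fixpoint unpair (t : nat) : nat * nat :=
  match t with
  | O => (0%nat, 0%nat)
  | S t' => match unpair t' with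
            | (S j, k) => (j, S k)
            | (O, k) => (S k, 0%nat)
            end
  end.

Fixpoint tri (s : nat) : nat := match s with O => O | S s' => (tri s' + s)%nat end.
Definition pairf (p : nat * nat) : nat := (tri (p.1 + p.2) + p.2)%nat.

Lemma pairfK t : pairf (unpair t) = t.
Proof.
elim: t => [|t IH] //=. move: IH. case: (unpair t) => [[|j] k] /= <-.
- rewrite /pairf /= !add0n !addn0 /=. by rewrite addnS.
- rewrite /pairf /= [(j + k.+1)%nat]addnS /=. lia.
Qed.

Lemma unpair_inj t t' : unpair t = unpair t' -> t = t'.
Proof. move=> E. by rewrite -(pairfK t) -(pairfK t') E. Qed.

Lemma unpair_bound t : ((unpair t).1 + (unpair t).2 <= t)%nat.
Proof.
elim: t => [|t IH] //=. move: IH. case: (unpair t) => [[|j] k] /=; lia.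
Qed.

Lemma unpair_diag s k : (k <= s)%nat -> unpair (tri s + k) = ((s - k)%nat, k).
Proof.
elim: s k => [|s IHs] k.
- rewrite leqn0 => /eqP -> //.
- elim: k => [|k IHk] Hk.
  + have E := IHs s (leqnn s). rewrite subnn in E.
    rewrite addn0 subn0 /= addnS /= E. done.
  + rewrite addnS /= IHk; last by apply: ltnW.
    have -> : (s.+1 - k = (s - k).+1)%nat by lia.
    done.
Qed.

Lemma unpair_pairf j k : unpair (pairf (j, k)) = (j, k).
Proof. rewrite /pairf /= unpair_diag; last by apply: leq_addl. congr pair. lia. Qed.

Lemma sumf_big f T : sum_f_R0 f T = \big[Rplus/0]_(t < T.+1) f t.
Proof.
elim: T => [|T IH]. rewrite big_ord_recr big_ord0 /=. simpl. lra.
rewrite big_ord_recr /= -IH. simpl. done.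
Qed.

Lemma rsum_subset (T : finType) (A : {set T}) (F : T -> R) :
  (forall p, 0 <= F p) -> \big[Rplus/0]_(p in A) F p <= \big[Rplus/0]_p F p.
Proof.
move=> H. rewrite [X in _ <= X](bigID (mem A)) /=. simpl.
have : 0 <= \big[Rplus/0]_(i | i \notin A) F i.
  by apply: (big_ind (fun a => 0 <= a)); [lra| move=> ? ? ? ?; lra | move=> ? _; done].
lra.
Qed.

Lemma sum_reindex (v : nat -> nat -> R) (e : nat -> R) (eps : R) T :
  (forall j k, 0 <= v j k) -> (forall j M, sum_f_R0 (v j) M <= e j) ->
  (forall M, sum_f_R0 e M <= eps) ->
  sum_f_R0 (fun t => v (unpair t).1 (unpair t).2) T <= eps.
Proof.
move=> Hv He Heps.
rewrite sumf_big.
have h1 : forall t : 'I_T.+1, ((unpair t).1 < T.+1)%nat.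
  move=> t. have := unpair_bound t. have := ltn_ord t. lia.
have h2 : forall t : 'I_T.+1, ((unpair t).2 < T.+1)%nat.
  move=> t. have := unpair_bound t. have := ltn_ord t. lia.
pose u (t : 'I_T.+1) : 'I_T.+1 * 'I_T.+1 := (Ordinal (h1 t), Ordinal (h2 t)).
pose F (p : 'I_T.+1 * 'I_T.+1) := v p.1 p.2.
have -> : \big[Rplus/0]_(t < T.+1) v (unpair t).1 (unpair t).2 = \big[Rplus/0]_(t in 'I_T.+1) F (u t).
  by apply: eq_bigr.
have Hinj : {in 'I_T.+1 &, injective u}.
  move=> t t' _ _ E. apply: val_inj. apply: unpair_inj.
  have E1 := f_equal (fun p => nat_of_ord p.1) E. have E2 := f_equal (fun p => nat_of_ord p.2) E.
  simpl in E1, E2. by case: (unpair t) E1 E2 => a b; case: (unpair t') => a' b' /= -> ->.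
rewrite -(big_imset _ Hinj).
apply: Rle_trans (rsum_subset _ (fun p => Hv _ _)) _.
rewrite -(pair_bigA _ (fun (j k : 'I_T.+1) => v j k)).
apply: Rle_trans (Heps T). rewrite sumf_big.
apply: rsum_le => j. rewrite -sumf_big. apply: He.
Qed.
Section Null.
Variable n : nat.
Implicit Types (M N X Y : Rn n -> Prop).

Lemma box_vol_ge0 (a b : Rn n) : (forall i, a i <= b i) -> 0 <= box_vol a b.
Proof.
move=> H. rewrite /box_vol. apply: (big_ind (fun x => 0 <= x)); [lra| |].
- move=> x y ? ?. by apply: Rmult_le_pos.
- move=> i _. have := H i. lra.
Qed.

Lemma null_sub X Y : (forall x, X x -> Y x) -> lebesgue_null Y -> lebesgue_null X.
Proof.
move=> HXY HY eps Heps. have [a [b [H1 [H2 H3]]]] := HY eps Heps.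
exists a, b. split=> //. split=> // x Hx. exact: H2 (HXY x Hx).
Qed.

Lemma null_empty : (0 < n)%nat -> lebesgue_null (fun _ : Rn n => False).
Proof.
case: n => [//|n'] _ eps Heps. exists (fun _ _ => 0), (fun _ _ => 0).
split. move=> *; lra. split. by move=> x [].
move=> m. have -> : sum_f_R0 (fun k => box_vol (fun _ : 'I_n'.+1 => 0) (fun _ => 0)) m = 0.
  rewrite /box_vol big_ord_recr /= Rminus_0_r Rmult_0_r sum_cte. simpl. lra.
lra.
Qed.

Lemma geom_sum eps K : sum_f_R0 (fun j => eps / 2 ^ j.+1) K = eps - eps / 2 ^ K.+1.
Proof.
elim: K => [|K IH]. simpl. field.
rewrite /= IH. simpl. field. apply: pow_nonzero. lra.
Qed.

Lemma null_union (M : nat -> Rn n -> Prop) :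
  (forall j, lebesgue_null (M j)) -> lebesgue_null (fun x => exists j, M j x).
Proof.
move=> H eps Heps.
have He : forall j, 0 < eps / 2 ^ j.+1.
  move=> j. apply: Rdiv_lt_0_compat => //. apply: pow_lt. lra.
pose C j := constructive_indefinite_description _ (H j _ (He j)).
pose a j := proj1_sig (C j).
pose D j := constructive_indefinite_description _ (proj2_sig (C j)).
pose b j := proj1_sig (D j).
have Hab : forall j, (forall k i, a j k i <= b j k i) /\
    (forall x, M j x -> exists k, forall i, a j k i <= x i <= b j k i) /\
    (forall m, sum_f_R0 (fun k => box_vol (a j k) (b j k)) m <= eps / 2 ^ j.+1).
  move=> j. exact: (proj2_sig (D j)).
exists (fun t => a (unpair t).1 (unpair t).2), (fun t => b (unpair t).1 (unpair t).2).
split; [|split].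
- move=> t i. by have [H1 _] := Hab (unpair t).1.
- move=> x [j Hj]. have [_ [H2 _]] := Hab j. have [k Hk] := H2 x Hj.
  exists (pairf (j, k)). by rewrite unpair_pairf.
- move=> m. apply: (sum_reindex (v := fun j k => box_vol (a j k) (b j k)) (e := fun j => eps / 2 ^ j.+1)).
  + move=> j k. apply: box_vol_ge0. by have [H1 _] := Hab j.
  + move=> j M'. by have [_ [_ H3]] := Hab j.
  + move=> M'. rewrite geom_sum. have := He M'. lra.
Qed.

Definition gmap (w : {ffun 'I_n -> nat * nat * bool}) (y : Rn n) : Rn n :=
  fun i => 2 * (INR (w i).1.1 - INR (w i).1.2) + (if (w i).2 then y i else - y i).

Lemma null_image w N : lebesgue_null N -> lebesgue_null (fun x => exists y, N y /\ x = gmap w y).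
Proof.
move=> H eps Heps. have [a [b [H1 [H2 H3]]]] := H eps Heps.
pose sh i := 2 * (INR (w i).1.1 - INR (w i).1.2).
exists (fun k i => sh i + (if (w i).2 then a k i else - b k i)),
       (fun k i => sh i + (if (w i).2 then b k i else - a k i)).
split; [|split].
- move=> k i /=. have := H1 k i. case: (w i).2; lra.
- move=> x [y [Hy ->]]. have [k Hk] := H2 y Hy. exists k => i.
  have := Hk i. rewrite /gmap /sh. case: (w i).2; lra.
- move=> m. apply: Rle_trans (H3 m). right. apply: sum_eq => k _.
  rewrite /box_vol. apply: eq_bigr => i _. case: (w i).2; ring.
Qed.

Definition nfl (t : R) : Z := (up (t / 2 + / 2) - 1)%Z.
Definition tau (t : R) : R := Rabs (t - 2 * IZR (nfl t)).

Lemma nfl_spec t : IZR (nfl t) <= t / 2 + / 2 < IZR (nfl t) + 1.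
Proof. rewrite /nfl minus_IZR. have [H1 H2] := archimed (t / 2 + / 2). lra. Qed.

Lemma tau_range t : 0 <= tau t <= 1.
Proof.
have := nfl_spec t. rewrite /tau. move: (IZR (nfl t)) => u Hu.
split. apply: Rabs_pos. apply: Rabs_le. lra.
Qed.

Lemma tau_min t (m : Z) : tau t <= Rabs (t - 2 * IZR m).
Proof.
have := nfl_spec t. rewrite /tau.
case: (Z.lt_total m (nfl t)) => [Hlt|[->|Hgt]] Hs.
- have : IZR m <= IZR (nfl t) - 1 by rewrite -minus_IZR; apply: IZR_le; lia.
  move: (IZR (nfl t)) (IZR m) Hs => u v Hs Hv.
  rewrite (Rabs_right (t - 2 * v)); last lra. apply: Rabs_le. lra.
- lra.
- have : IZR (nfl t) + 1 <= IZR m by rewrite -plus_IZR; apply: IZR_le; lia.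
  move: (IZR (nfl t)) (IZR m) Hs => u v Hs Hv.
  rewrite (Rabs_left (t - 2 * v)); last lra. apply: Rabs_le. lra.
Qed.

Lemma tau_lip s t : Rabs (tau s - tau t) <= Rabs (s - t).
Proof.
have H1 : tau s <= Rabs (s - t) + tau t.
  apply: Rle_trans (tau_min s (nfl t)) _. rewrite /tau.
  have -> : s - 2 * IZR (nfl t) = (s - t) + (t - 2 * IZR (nfl t)) by ring.
  apply: Rabs_triang.
have H2 : tau t <= Rabs (t - s) + tau s.
  apply: Rle_trans (tau_min t (nfl s)) _. rewrite /tau.
  have -> : t - 2 * IZR (nfl s) = (t - s) + (s - 2 * IZR (nfl s)) by ring.
  apply: Rabs_triang.
rewrite Rabs_minus_sym in H2. apply: Rabs_le. lra.
Qed.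

Lemma tau_decomp t : t = 2 * IZR (nfl t) + tau t \/ t = 2 * IZR (nfl t) - tau t.
Proof.
rewrite /tau. case: (Rle_dec 0 (t - 2 * IZR (nfl t))) => H.
- left. rewrite Rabs_right; lra.
- right. rewrite Rabs_left; lra.
Qed.

Definition pimap (x : Rn n) : Rn n := fun i => tau (x i).

Lemma pimap_lip x y : edist (pimap x) (pimap y) <= edist x y.
Proof.
apply: sqrt_le_1_alt. apply: rsum_le => i.
have := Rsqr_le_abs_1 _ _ (tau_lip (x i) (y i)). by rewrite /Rsqr.
Qed.

Lemma pimap_cube x i : 0 <= pimap x i <= 1.
Proof. exact: tau_range. Qed.

Lemma pimap_null N : lebesgue_null N -> lebesgue_null (fun x => N (pimap x)).
Proof.
move=> H.
pose M j := fun x => match @unpickle {ffun 'I_n -> nat * nat * bool} j with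
                     | Some w => exists y, N y /\ x = gmap w y
                     | None => False end.
apply: (null_sub (Y := fun x => exists j, M j x)); last first.
  apply: null_union => j. rewrite /M. case: unpickle => [w|].
  - exact: null_image.
  - apply: (null_sub (Y := N)) H. by [].
move=> x Hx.
have Hi : forall i, exists p : nat * nat * bool,
    x i = 2 * (INR p.1.1 - INR p.1.2) + (if p.2 then pimap x i else - pimap x i).
  move=> i. have [p [q Hpq]] := IZR_nat_diff (nfl (x i)).
  case: (tau_decomp (x i)) => E.
  - exists (p, q, true). rewrite /pimap /= -Hpq. exact: E.
  - exists (p, q, false). rewrite /pimap /= -Hpq. lra.
pose w := [ffun i => proj1_sig (constructive_indefinite_description _ (Hi i))].
exists (pickle w). rewrite /M pickleK. exists (pimap x). split=> //.
apply: functional_extensionality => i. rewrite /gmap /w ffunE.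
by case: constructive_indefinite_description.
Qed.
End Null.
Definition cube (n : nat) (x : Rn n) := forall i, 0 <= x i <= 1.

Lemma hypQ n (hs : hyp_star n) (J : R -> Prop) (G : R -> Rn n -> Prop) (N : Rn n -> Prop) :
  small J -> (forall b, J b -> is_closed (G b) /\ lebesgue_null (G b)) -> lebesgue_null N ->
  exists x, cube x /\ ~ N x /\ forall b, J b -> ~ G b x.
Proof.
move=> HJ HG HN.
pose F (Y : Rn n -> Prop) := exists b, J b /\ Y = (fun x => G b (pimap x)).
have HF : forall Y, F Y -> is_closed Y /\ lebesgue_null Y.
  move=> Y [b [Hb ->]]. have [H1 H2] := HG b Hb. split.
  - apply: closed_preimage H1. exact: pimap_lip.
  - exact: pimap_null.
pose sel (s : {Y | F Y}) : R := proj1_sig (constructive_indefinite_description _ (proj2_sig s)).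
have sel_spec : forall s, J (sel s) /\ proj1_sig s = (fun x => G (sel s) (pimap x)).
  move=> s. rewrite /sel. by case: constructive_indefinite_description.
have sel_inj : forall u v, sel u = sel v -> u = v.
  move=> u v E. have [_ Eu] := sel_spec u. have [_ Ev] := sel_spec v.
  have E' : proj1_sig u = proj1_sig v by rewrite Eu Ev E.
  apply: eq_sig_hprop E'. move=> ? ? ?. apply: proof_irrelevance.
have Hcard : card_lt_continuum F.
  split.
  - exists sel. exact: sel_inj.
  - move=> [h Hh]. apply: HJ. exists (fun r => sel (h r)). split.
    + move=> r s E. apply: Hh. exact: sel_inj.
    + move=> r. by have [] := sel_spec (h r).
have [x [Hx1 Hx2]] := hs F HF Hcard (fun x => N (pimap x)) (pimap_null HN).
exists (pimap x). split; first by move=> i; apply: pimap_cube. split=> // b Hb Hg.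
apply: Hx2. exists (fun x => G b (pimap x)). split=> //. by exists b.
Qed.

Lemma null_Cs n (hn : (0 < n)%nat) c : lebesgue_null (@Cs n c).
Proof.
case: (Classical_Prop.classic (lebesgue_null (@Craw n (dataOf c)))) => H.
- apply: null_sub H. by move=> x [].
- apply: (null_sub (Y := fun _ => False)); last exact: null_empty. by move=> x [].
Qed.

Lemma null_Ns n (hn : (0 < n)%nat) c : lebesgue_null (@Ns n c).
Proof.
case: (Classical_Prop.classic (lebesgue_null (@Nraw n (dataOf c)))) => H.
- apply: null_sub H. by move=> x [].
- apply: (null_sub (Y := fun _ => False)); last exact: null_empty. by move=> x [].
Qed.

Lemma construct n (hn : (0 < n)%nat) (hs : hyp_star n) :
  exists A : Rn n -> Prop, (forall x, A x -> cube x) /\ ~ lebesgue_null A /\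
  forall (c : nat -> bool) (h : R -> Rn n), (forall r s, h r = h s -> r = s) ->
    (forall r, A (h r)) -> (forall r, @Cs n c (h r)) -> False.
Proof.
have [I [lt [HI [Hlow Hup]]]] := index_exists.
have [hI [hIinj hII]] : exists h, injR h /\ forall r, I (h r) by apply: NNPP.
pose e (a : R) : nat -> bool :=
  match excluded_middle_informative (exists c, hI (kappa c) = a) with
  | left H => proj1_sig (constructive_indefinite_description _ H)
  | right _ => fun _ => false end.
have e_spec : forall c, e (hI (kappa c)) = c.
  move=> c. rewrite /e. case: excluded_middle_informative => [H|H]; last by exfalso; apply: H; eauto.
  case: constructive_indefinite_description => /= c' Hc'. apply: kappa_inj. exact: hIinj.
have Hx : forall a, exists x, cube x /\ ~ @Ns n (e a) x /\
    forall b, (I a /\ I b /\ lt b a) -> ~ @Cs n (e b) x.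
  move=> a. apply: hypQ => //.
  - case: (Classical_Prop.classic (I a)) => Ha.
    + apply: small_sub (Hlow a Ha). by move=> r [_ [_ H]].
    + move=> [h [_ Hh]]. have [] := Hh 0. done.
  - move=> b _. split. exact: closed_Cs. exact: null_Cs.
  - exact: null_Ns.
pose X a := proj1_sig (constructive_indefinite_description _ (Hx a)).
have X_spec : forall a, cube (X a) /\ ~ @Ns n (e a) (X a) /\
    forall b, (I a /\ I b /\ lt b a) -> ~ @Cs n (e b) (X a).
  move=> a. rewrite /X. by case: constructive_indefinite_description.
exists (fun x => exists a, I a /\ x = X a). split; [|split].
- move=> x [a [_ ->]]. by have [] := X_spec a.
- move=> Hnull.
  have Hcov : forall m : nat, exists ab : (nat -> Rn n) * (nat -> Rn n),
      (forall k i, ab.1 k i <= ab.2 k i) /\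
      (forall x, (exists a, I a /\ x = X a) -> exists k, forall i, ab.1 k i <= x i <= ab.2 k i) /\
      (forall M, sum_f_R0 (fun k => box_vol (ab.1 k) (ab.2 k)) M <= / INR m.+1).
    move=> m. have Hp : 0 < / INR m.+1 by apply: Rinv_0_lt_compat; apply: lt_0_INR; lia.
    have [a [b Hab]] := Hnull _ Hp. by exists (a, b).
  pose AB m := proj1_sig (constructive_indefinite_description _ (Hcov m)).
  have AB_spec : forall m, _ := fun m => proj2_sig (constructive_indefinite_description _ (Hcov m)).
  have [c [Hca [Hcb _]]] := data_surj (fun m => (AB m).1) (fun m => (AB m).2) (fun _ => 0%nat).
  have HN : lebesgue_null (@Nraw n (dataOf c)).
    move=> eps Heps. have [m [Hm1 Hm2]] := archimed_cor1 eps Heps.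
    case: m Hm1 Hm2 => [|m] Hm1 Hm2; first by lia.
    have [H1 [H2 H3]] := AB_spec m.
    exists (AB m).1, (AB m).2. split=> //. split.
    + move=> x Hx'. have [k Hk] := Hx' m. exists k. by rewrite -Hca -Hcb.
    + move=> M. apply: Rle_trans (H3 M) _. lra.
  set a := hI (kappa c).
  have [_ [HNs _]] := X_spec a. apply: HNs. rewrite /a e_spec. split=> // m.
  have [_ [H2 _]] := AB_spec m. have [k Hk] := H2 (X a) (ex_intro _ a (conj (hII _) erefl)).
  exists k. by rewrite Hca Hcb.
- move=> c h hinj hA hC.
  set b := hI (kappa c).
  pose al r := proj1_sig (constructive_indefinite_description _ (hA r)).
  have al_spec : forall r, I (al r) /\ h r = X (al r).
    move=> r. rewrite /al. by case: constructive_indefinite_description.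
  apply: (Hup b (hII _)). exists al. split.
  + move=> r s E. apply: hinj. have [_ E1] := al_spec r. have [_ E2] := al_spec s. by rewrite E1 E2 E.
  + move=> r Hlt. have [Hr Er] := al_spec r. have [_ [_ H3]] := X_spec (al r).
    apply: (H3 b). split=> //. split=> //. exact: hII.
    rewrite -Er /b e_spec. exact: hC.
Qed.
Lemma sum_card_disj (T : finType) (N : nat) (G : 'I_N -> {set T}) :
  (forall t t' x, x \in G t -> x \in G t' -> t = t') ->
  (\sum_(t < N) #|G t| <= #|T|)%nat.
Proof.
move=> Hd.
have E : forall t, #|G t| = (\sum_(x : T) (x \in G t : nat))%nat.
  move=> t. rewrite -sum1_card big_mkcond /=. apply: eq_bigr => x _. by case: (x \in G t).
rewrite (eq_bigr (fun t => \sum_(x : T) (x \in G t : nat))%nat); last by move=> t _; rewrite E.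
rewrite exchange_big /= -[X in (_ <= X)%nat]sum1_card.
apply: leq_sum => x _.
have -> : (\sum_(t < N) (x \in G t : nat) = #|[pred t | x \in G t]|)%nat.
  rewrite -sum1_card [in RHS]big_mkcond /=. apply: eq_bigr => t _. by rewrite inE; case: (x \in G t).
apply/card_le1_eqP => t t'. rewrite !inE => H1 H2. exact: (Hd _ _ _ H2 H1).
Qed.

Lemma two_small (T : finType) (N : nat) (G : 'I_N -> {set T}) :
  (2 <= N)%nat -> (forall t t' x, x \in G t -> x \in G t' -> t = t') ->
  exists t0 t1 : 'I_N, (t0 < t1)%nat /\ (#|G t0| * N <= 2 * #|T|)%nat /\ (#|G t1| * N <= 2 * #|T|)%nat.
Proof.
move=> HN Hd.
pose B := [set t | (2 * #|T| < #|G t| * N)%nat].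
have HB : (1 < #|~: B|)%nat.
  rewrite ltnNge. apply/negP => Hle.
  have HcB : (N - 1 <= #|B|)%nat.
    have := cardsC B. rewrite card_ord. lia.
  have Hs := sum_card_disj Hd.
  have H1 : (\sum_(t in B) (2 * #|T|).+1 <= \sum_(t < N) #|G t| * N)%nat.
    rewrite big_mkcond /=. apply: leq_sum => t _. rewrite inE.
    case: ifP => // H. 
  rewrite sum_nat_const -big_distrl /= in H1.
  have H2 : ((N - 1) * (2 * #|T|).+1 <= (\sum_(t < N) #|G t|) * N)%nat.
    apply: leq_trans H1. by apply: leq_mul.
  have H3 : ((\sum_(t < N) #|G t|) * N <= #|T| * N)%nat by apply: leq_mul.
  move: H2 H3 HN. move: (#|T|) (\sum_(t < N) #|G t|)%nat => a s. nia.
have [t [t' [Ht Ht' Hne]]] := card_gt1P HB.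
move: Ht Ht'. rewrite !inE => Ht Ht'.
have Ht2 : (#|G t| * N <= 2 * #|T|)%nat by rewrite leqNgt.
have Ht'2 : (#|G t'| * N <= 2 * #|T|)%nat by rewrite leqNgt.
case: (ltngtP t t') => [H|H|H].
- by exists t, t'.
- by exists t', t.
- exfalso. move/eqP: Hne; apply. exact: val_inj.
Qed.
Section Lists.
Variable n : nat.
Definition dflt : Rn n * Rn n := (fun _ => 0, fun _ => 0).
Definition listvol (B : seq (Rn n * Rn n)) : R := \big[Rplus/0]_(p <- B) box_vol p.1 p.2.
Definition goodB (B : seq (Rn n * Rn n)) := forall k i, (nth dflt B k).1 i <= (nth dflt B k).2 i.
Definition allgood (B : seq (Rn n * Rn n)) := forall p, List.In p B -> forall i, p.1 i <= p.2 i.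

Lemma allgood_goodB B : allgood B -> goodB B.
Proof.
elim: B => [|p B IH] H k i. by rewrite nth_nil /=; lra.
case: k => [|k] /=. apply: H. by left.
apply: IH. move=> q Hq. apply: H. by right.
Qed.

Lemma In_nth (B : seq (Rn n * Rn n)) p : List.In p B -> exists k, (k < size B)%nat /\ nth dflt B k = p.
Proof.
elim: B => [|q B IH] //= [->|H]. by exists 0%nat.
have [k [Hk E]] := IH H. by exists k.+1.
Qed.

Lemma nth_In (B : seq (Rn n * Rn n)) k : (k < size B)%nat -> List.In (nth dflt B k) B.
Proof.
elim: B k => [|q B IH] [|k] //= Hk. by left. right. exact: IH.
Qed.

Lemma iter_Rplus k c : iter k (Rplus c) 0 = INR k * c.
Proof.
elim: k => [|k IH]. simpl; lra.
change (iter k.+1 (Rplus c) 0) with (c + iter k (Rplus c) 0). rewrite IH S_INR. lra.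
Qed.

Lemma iter_Rmult k c : iter k (Rmult c) 1 = c ^ k.
Proof. elim: k => [|k IH] //=. by rewrite IH. Qed.

Lemma listvol_cat B1 B2 : listvol (B1 ++ B2) = listvol B1 + listvol B2.
Proof. by rewrite /listvol big_cat. Qed.
End Lists.

Lemma INR_muln a b : INR (a * b)%nat = INR a * INR b.
Proof. exact: mult_INR. Qed.
Lemma INR_expn a k : INR (expn a k) = INR a ^ k.
Proof. elim: k => [|k IH]. by rewrite expn0. by rewrite expnS INR_muln IH. Qed.

Lemma grid1 (L : nat) t : (0 < L)%nat -> 0 <= t <= INR L -> exists k : 'I_L, INR k <= t <= INR k + 1.
Proof.
elim: L t => [//|L IH] t _ Ht.
case: (Rle_dec t (INR L)) => H.
- case: L IH Ht H => [|L] IH Ht H.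
  + exists ord0. simpl in *. lra.
  + have [k Hk] := IH t erefl (conj (proj1 Ht) H). exists (widen_ord (leqnSn _) k). exact: Hk.
- exists ord_max. rewrite /= -S_INR. lra.
Qed.

Section Step.
Variables (n : nat) (S : Rn n -> Prop) (f : Rn n -> R).
Hypothesis hn : (0 < n)%nat.
Hypothesis Scube : forall x, S x -> cube x.
Hypothesis Huc : unif_cont_on S f.

Definition gbox (L : nat) (z : {ffun 'I_n -> 'I_L}) : Rn n * Rn n :=
  (fun i => INR (z i) / INR L, fun i => INR (z i).+1 / INR L).

Definition covers (B : seq (Rn n * Rn n)) (lo hi : R) :=
  forall x, S x -> lo <= f x <= hi -> exists k, (k < size B)%nat /\ inbox (nth (dflt n) B k).1 (nth (dflt n) B k).2 x.

Lemma grid_cover L x : (0 < L)%nat -> cube x -> exists z : {ffun 'I_n -> 'I_L}, inbox (gbox z).1 (gbox z).2 x.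
Proof.
move=> HL Hx. have HL' : 0 < INR L by apply: lt_0_INR; lia.
have Hi : forall i, exists k : 'I_L, INR k / INR L <= x i <= INR k.+1 / INR L.
  move=> i. have [Hx1 Hx2] := Hx i.
  have [k Hk] := @grid1 L (x i * INR L) HL ltac:(split; nra).
  exists k. rewrite S_INR. split.
  + apply: (Rmult_le_reg_r (INR L)) => //. rewrite /Rdiv Rmult_assoc Rinv_l; lra.
  + apply: (Rmult_le_reg_r (INR L)) => //. rewrite /Rdiv Rmult_assoc Rinv_l; lra.
exists [ffun i => proj1_sig (constructive_indefinite_description _ (Hi i))].
move=> i. rewrite /gbox /= ffunE. by case: constructive_indefinite_description.
Qed.

Lemma gbox_vol L (z : {ffun 'I_n -> 'I_L}) : (0 < L)%nat -> box_vol (gbox z).1 (gbox z).2 = (/ INR L) ^ n.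
Proof.
move=> HL. have HL' : 0 < INR L by apply: lt_0_INR; lia.
rewrite /box_vol /gbox. cbn [fst snd]. rewrite (eq_bigr (fun _ => / INR L)).
- by rewrite big_const_ord iter_Rmult.
- move=> i _. rewrite S_INR. field. lra.
Qed.

Lemma step (N : nat) u v : (2 <= N)%nat -> u < v ->
  exists u0 v0 u1 v1 (B0 B1 : seq (Rn n * Rn n)),
    u <= u0 /\ u0 < v0 /\ v0 < u1 /\ u1 < v1 /\ v1 <= v /\
    covers B0 u0 v0 /\ covers B1 u1 v1 /\ allgood B0 /\ allgood B1 /\
    listvol B0 <= 2 / INR N /\ listvol B1 <= 2 / INR N.
Proof.
move=> HN Huv.
have HNr : 2 <= INR N by have := le_INR _ _ (elimT leP HN).
set h := (v - u) / (2 * INR N - 1).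
have Hh : 0 < h by apply: Rdiv_lt_0_compat; lra.
have [del [Hdel Hu]] := Huc Hh.
have Hn' : 0 < INR n by apply: lt_0_INR; lia.
have [L [HL1 HL2]] := archimed_cor1 (del / INR n) (Rdiv_lt_0_compat _ _ Hdel Hn').
have HL' : 0 < INR L by apply: lt_0_INR; lia.
have HLd : INR n * / INR L < del.
  have := Rmult_lt_compat_l (INR n) _ _ Hn' HL1.
  have -> : INR n * (del / INR n) = del by field; lra. done.
pose lo (t : nat) := u + 2 * INR t * h.
pose hi (t : nat) := u + (2 * INR t + 1) * h.
pose G (t : 'I_N) := [set z : {ffun 'I_n -> 'I_L} |
   `[< exists x, S x /\ lo t <= f x <= hi t /\ inbox (gbox z).1 (gbox z).2 x >]].
have Hdisj : forall t t' z, z \in G t -> z \in G t' -> t = t'.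
  move=> t t' z. rewrite !inE => /asboolP [x [Sx [Hfx Hbx]]] /asboolP [y [Sy [Hfy Hby]]].
  have Hd : edist x y < del.
    apply: Rle_lt_trans HLd. apply: edist_le_const => i.
    have := Hbx i. have := Hby i. rewrite /gbox; cbn [fst snd]; rewrite S_INR => H1 H2.
    apply: Rabs_le. have : (INR (z i) + 1) / INR L = INR (z i) / INR L + / INR L by field; lra.
    lra.
  have := Hu x y Sx Sy Hd. move=> Hf.
  case: (ltngtP t t') => [H|H|H].
  + exfalso. have : INR t + 1 <= INR t' by rewrite -S_INR; apply: le_INR; apply/leP.
    move=> H'. have := Rmult_le_compat_r h _ _ (Rlt_le _ _ Hh) H'.
    have := Rle_abs (f x - f y). have := Rle_abs (- (f x - f y)). rewrite Rabs_Ropp.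
    rewrite /lo /hi in Hfx Hfy. nra.
  + exfalso. have : INR t' + 1 <= INR t by rewrite -S_INR; apply: le_INR; apply/leP.
    move=> H'. have := Rmult_le_compat_r h _ _ (Rlt_le _ _ Hh) H'.
    have := Rle_abs (f x - f y). have := Rle_abs (- (f x - f y)). rewrite Rabs_Ropp.
    rewrite /lo /hi in Hfx Hfy. nra.
  + exact: val_inj.
have [t0 [t1 [Ht01 [Hc0 Hc1]]]] := two_small HN Hdisj.
pose B (t : 'I_N) := [seq gbox z | z <- enum (G t)].
have Hcov : forall t : 'I_N, covers (B t) (lo t) (hi t).
  move=> t x Sx Hfx. have [z Hz] := grid_cover (ltac:(lia) : (0 < L)%nat) (Scube Sx).
  have Hzin : z \in enum (G t).
    rewrite mem_enum inE. apply/asboolP. by exists x.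
  exists (index z (enum (G t))). rewrite size_map index_mem. split=> //.
  by rewrite (nth_map z) ?index_mem // nth_index.
have Hgood : forall t, allgood (B t).
  move=> t p Hp i. have [z [Ez _]] := (List.in_map_iff _ _ _).1 Hp. rewrite -Ez.
  rewrite /gbox; cbn [fst snd]; rewrite S_INR. apply: Rmult_le_compat_r. by apply: Rlt_le; apply: Rinv_0_lt_compat. lra.
have Hcard : #|{ffun 'I_n -> 'I_L}| = expn L n by rewrite card_ffun !card_ord.
have Hvol : forall t : 'I_N, (#|G t| * N <= 2 * #|{ffun 'I_n -> 'I_L}|)%nat -> listvol (B t) <= 2 / INR N.
  move=> t Ht. rewrite /listvol big_map.
  rewrite (eq_bigr (fun _ => (/ INR L) ^ n)); last by move=> z _; apply: gbox_vol; lia.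
  rewrite big_const_seq iter_Rplus count_predT -cardE.
  rewrite Hcard in Ht. have := le_INR _ _ (elimT leP Ht). rewrite !INR_muln INR_expn.
  have HP : 0 < INR L ^ n by apply: pow_lt.
  rewrite pow_inv.
  move: (INR #|G t|) (INR L ^ n) HP => a P HP Hle.
  have HN0 : 0 < INR N by lra.
  have -> : a * / P = (a * INR N) * / (P * INR N) by field; lra.
  have -> : 2 / INR N = (2 * P) * / (P * INR N) by field; lra.
  apply: Rmult_le_compat_r. apply: Rlt_le. apply: Rinv_0_lt_compat. nra.
  simpl in Hle. lra.
have Ht0N : (t1 < N)%nat := ltn_ord t1.
have Hlt : INR t0 + 1 <= INR t1 by rewrite -S_INR; apply: le_INR; apply/leP.
have Ht1 : INR t1 + 1 <= INR N by rewrite -S_INR; apply: le_INR; apply/leP.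
have Hv : u + (2 * INR N - 1) * h = v by rewrite /h; field; lra.
have Ht00 : 0 <= INR t0 by apply: pos_INR.
exists (lo t0), (hi t0), (lo t1), (hi t1), (B t0), (B t1).
rewrite /lo /hi. split; [nra|split; [nra|split; [nra|split; [nra|split; [nra|]]]]].
split; [exact: Hcov|split; [exact: Hcov|split; [exact: Hgood|split; [exact: Hgood|]]]].
split; exact: Hvol.
Qed.
End Step.
Section Lists2.
Variable n : nat.
Hypothesis hn : (0 < n)%nat.

Lemma vol_dflt : box_vol (dflt n).1 (dflt n).2 = 0.
Proof.
case: n hn => [//|n'] _. rewrite /box_vol big_ord_recr /=. simpl. rewrite Rminus_0_r Rmult_0_r. done.
Qed.

Lemma listvol_ge0 (B : seq (Rn n * Rn n)) : allgood B -> 0 <= listvol B.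
Proof.
elim: B => [|p B IH] H. rewrite /listvol big_nil. lra.
rewrite /listvol big_cons. simpl.
have H1 : 0 <= box_vol p.1 p.2 by apply: box_vol_ge0; apply: H; left.
have H2 : 0 <= listvol B by apply: IH => q Hq; apply: H; right.
rewrite /listvol in H2. lra.
Qed.

Lemma sumf_nth_le (B : seq (Rn n * Rn n)) M : allgood B ->
  sum_f_R0 (fun k => box_vol (nth (dflt n) B k).1 (nth (dflt n) B k).2) M <= listvol B.
Proof.
elim: B M => [|p B IH] M H.
- rewrite /listvol big_nil.
  have -> : (fun k => box_vol (nth (dflt n) [::] k).1 (nth (dflt n) [::] k).2) = (fun _ => 0).
    apply: functional_extensionality => k. by rewrite nth_nil vol_dflt.
  rewrite sum_cte. lra.
- have HB : allgood B by move=> q Hq; apply: H; right.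
  have H1 : 0 <= box_vol p.1 p.2 by apply: box_vol_ge0; apply: H; left.
  rewrite /listvol big_cons. simpl. fold (listvol B).
  case: M => [|M].
  + simpl. have := listvol_ge0 HB. lra.
  + rewrite decomp_sum; last lia. simpl. have := IH M HB. lra.
Qed.

Lemma allgood_flatten (X : Type) (F : X -> seq (Rn n * Rn n)) (l : seq X) :
  (forall s, List.In s l -> allgood (F s)) -> allgood (flatten [seq F s | s <- l]).
Proof.
elim: l => [|s l IH] H p //= Hp.
case: (List.in_app_or _ _ _ Hp) => Hp'.
- apply: (H s) => //. by left.
- apply: IH Hp'. move=> s' Hs'. apply: H. by right.
Qed.

Lemma In_flatten (X : Type) (F : X -> seq (Rn n * Rn n)) (l : seq X) s p :
  List.In s l -> List.In p (F s) -> List.In p (flatten [seq F s | s <- l]).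
Proof.
elim: l => [|s' l IH] //= [->|Hs] Hp; apply: List.in_or_app; [left|right] => //. exact: IH.
Qed.

Lemma listvol_flatten (X : Type) (F : X -> seq (Rn n * Rn n)) (l : seq X) :
  listvol (flatten [seq F s | s <- l]) = \big[Rplus/0]_(s <- l) listvol (F s).
Proof.
elim: l => [|s l IH]. by rewrite /listvol !big_nil.
by rewrite /= listvol_cat IH big_cons.
Qed.
End Lists2.

Fixpoint blists (k : nat) : seq (seq bool) :=
  match k with
  | O => [:: [::]]
  | S k' => [seq false :: s | s <- blists k'] ++ [seq true :: s | s <- blists k']
  end.

Lemma size_blists k : size (blists k) = expn 2 k.
Proof. elim: k => [|k IH] //=. by rewrite size_cat !size_map IH expnS mul2n addnn. Qed.

Lemma blists_In s : List.In s (blists (size s)).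
Proof.
elim: s => [|b s IH] /=. by left.
apply: List.in_or_app. case: b; [right|left]; exact: (List.in_map (cons _) _ _ IH).
Qed.

Lemma blists_size k s : List.In s (blists k) -> size s = k.
Proof.
elim: k s => [|k IH] s /=. by case=> // <-.
move=> Hs. case: (List.in_app_or _ _ _ Hs) => Hs'; have [s' [<- Hs'']] := (List.in_map_iff _ _ _).1 Hs'; by rewrite /= (IH _ Hs'').
Qed.

Lemma rsum_seq_le (X : Type) (l : seq X) (F G : X -> R) :
  (forall x, List.In x l -> F x <= G x) ->
  \big[Rplus/0]_(x <- l) F x <= \big[Rplus/0]_(x <- l) G x.
Proof.
elim: l => [|x l IH] H. rewrite !big_nil. lra.
rewrite !big_cons. simpl. have := H x (or_introl erefl).
have := IH (fun y Hy => H y (or_intror Hy)). lra.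
Qed.

Lemma rsum_seq_const (X : Type) (l : seq X) c : \big[Rplus/0]_(x <- l) c = INR (size l) * c.
Proof. by rewrite big_const_seq iter_Rplus count_predT. Qed.

Lemma INR_le_pow2 k : INR k <= 2 ^ k.
Proof.
elim: k => [|k IH]. simpl; lra.
rewrite S_INR /=. have : 1 <= 2 ^ k by apply: pow_R1_Rle; lra. lra.
Qed.
Section Tree.
Variables (n : nat) (S : Rn n -> Prop) (f : Rn n -> R) (c d : R).
Hypothesis hn : (0 < n)%nat.
Hypothesis Scube : forall x, S x -> cube x.
Hypothesis Huc : unif_cont_on S f.
Hypothesis Hcd : c < d.
Hypothesis Honto : forall y, c <= y <= d -> exists x, S x /\ f x = y.

Record stepR := mkStep { su0 : R; sv0 : R; su1 : R; sv1 : R;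
  sB0 : seq (Rn n * Rn n); sB1 : seq (Rn n * Rn n) }.
Record nodeR := mkNode { nu : R; nv : R; nB : seq (Rn n * Rn n) }.

Definition stepP (m : nat) (u v : R) (r : stepR) :=
  u <= su0 r /\ su0 r < sv0 r /\ sv0 r < su1 r /\ su1 r < sv1 r /\ sv1 r <= v /\
  covers S f (sB0 r) (su0 r) (sv0 r) /\ covers S f (sB1 r) (su1 r) (sv1 r) /\
  allgood (sB0 r) /\ allgood (sB1 r) /\
  listvol (sB0 r) <= 2 / INR (expn 4 m.+1) /\ listvol (sB1 r) <= 2 / INR (expn 4 m.+1).

Lemma step_ex m u v : u < v -> exists r, stepP m u v r.
Proof.
move=> Huv.
have H4 : (2 <= expn 4 m.+1)%nat.
  rewrite expnS. have : (0 < expn 4 m)%nat by rewrite expn_gt0. lia.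
have [u0 [v0 [u1 [v1 [B0 [B1 H]]]]]] := step hn Scube Huc H4 Huv.
by exists (mkStep u0 v0 u1 v1 B0 B1).
Qed.

Definition stepF (m : nat) (u v : R) : stepR :=
  match excluded_middle_informative (u < v) with
  | left H => proj1_sig (constructive_indefinite_description _ (step_ex m H))
  | right _ => mkStep 0 0 0 0 [::] [::]
  end.

Lemma stepF_spec m u v : u < v -> stepP m u v (stepF m u v).
Proof.
move=> H. rewrite /stepF. case: excluded_middle_informative => // H'.
by case: constructive_indefinite_description.
Qed.

Fixpoint node (s : seq bool) : nodeR :=
  match s with
  | [::] => mkNode c d [::]
  | b :: s' => let r := stepF (size s') (nu (node s')) (nv (node s')) in
               if b then mkNode (su1 r) (sv1 r) (sB1 r) else mkNode (su0 r) (sv0 r) (sB0 r)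
  end.

Lemma node_lt s : nu (node s) < nv (node s).
Proof.
elim: s => [|b s IH] /=. done.
have := stepF_spec (size s) IH. case: b => /=; rewrite /stepP; lra.
Qed.

Lemma node_spec s : stepP (size s) (nu (node s)) (nv (node s))
   (stepF (size s) (nu (node s)) (nv (node s))).
Proof. apply: stepF_spec. exact: node_lt. Qed.

Lemma node_nest s b : nu (node s) <= nu (node (b :: s)) /\ nv (node (b :: s)) <= nv (node s).
Proof. have := node_spec s. rewrite /stepP /=. case: b => /=; lra. Qed.

Lemma node_sep s : nv (node (false :: s)) < nu (node (true :: s)).
Proof. have := node_spec s. rewrite /stepP /=. lra. Qed.

Lemma node_covers s b : covers S f (nB (node (b :: s))) (nu (node (b :: s))) (nv (node (b :: s))).
Proof. have := node_spec s. rewrite /stepP /=. case: b => /=; tauto. Qed.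

Lemma node_good s b : allgood (nB (node (b :: s))).
Proof. have := node_spec s. rewrite /stepP /=. case: b => /=; tauto. Qed.

Lemma node_vol s b : listvol (nB (node (b :: s))) <= 2 / INR (expn 4 (size s).+1).
Proof. have := node_spec s. rewrite /stepP /=. case: b => /=; tauto. Qed.

Definition lev (m : nat) : seq (Rn n * Rn n) := flatten [seq nB (node s) | s <- blists m.+1].

Lemma lev_good m : allgood (lev m).
Proof.
apply: allgood_flatten => s Hs. have := blists_size Hs.
case: s Hs => [//|b s] _ _. exact: node_good.
Qed.

Lemma lev_vol m : listvol (lev m) <= / 2 ^ m.
Proof.
rewrite /lev listvol_flatten /=.
rewrite big_cat /= !big_map.
have Hb : forall b, \big[Rplus/0]_(j <- blists m) listvol (nB (node (b :: j))) <= INR (expn 2 m) * (2 / INR (expn 4 m.+1)).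
  move=> b. rewrite -size_blists -rsum_seq_const. apply: rsum_seq_le => s Hs.
  have := node_vol s b. by rewrite (blists_size Hs).
have := Hb false. have := Hb true. simpl.
rewrite !INR_expn.
have -> : INR 2 ^ m * (2 / INR 4 ^ m.+1) = / 2 ^ m / 2.
  have -> : INR 4 = 2 * 2 by simpl; lra.
  have -> : INR 2 = 2 by simpl; lra.
  rewrite Rpow_mult_distr /=. field. apply: pow_nonzero; lra.
lra.
Qed.

Definition Cset : Rn n -> Prop :=
  fun x => forall m, exists k, (k < size (lev m))%nat /\ inbox (nth (dflt n) (lev m) k).1 (nth (dflt n) (lev m) k).2 x.

Lemma Cset_null : lebesgue_null Cset.
Proof.
move=> eps Heps. have [N [HN1 HN2]] := archimed_cor1 eps Heps.
exists (fun k => (nth (dflt n) (lev N) k).1), (fun k => (nth (dflt n) (lev N) k).2).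
split; [|split].
- move=> k i. exact: (allgood_goodB (@lev_good N) k i).
- move=> x Hx. have [k [_ Hk]] := Hx N. by exists k.
- move=> M. apply: Rle_trans (sumf_nth_le hn M (@lev_good N)) _.
  apply: Rle_trans (lev_vol N) _.
  have HN0 : 0 < INR N by apply: lt_0_INR.
  apply: Rlt_le. apply: Rle_lt_trans HN1. apply: Rinv_le_contravar => //. exact: INR_le_pow2.
Qed.

Fixpoint path (sg : nat -> bool) (k : nat) : seq bool :=
  match k with O => [::] | k'.+1 => sg k' :: path sg k' end.

Lemma size_path sg k : size (path sg k) = k.
Proof. elim: k => [|k IH] //=. by rewrite IH. Qed.

Definition U sg k := nu (node (path sg k)).
Definition V sg k := nv (node (path sg k)).

Lemma U_mono sg j t : U sg j <= U sg (j + t).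
Proof.
elim: t => [|t IH]. rewrite addn0. lra.
rewrite addnS. have := node_nest (path sg (j + t)) (sg (j + t)%nat). rewrite /U in IH *.
change (path sg (j + t).+1) with (sg (j + t)%nat :: path sg (j + t)). lra.
Qed.

Lemma V_mono sg j t : V sg (j + t) <= V sg j.
Proof.
elim: t => [|t IH]. rewrite addn0. lra.
rewrite addnS. have := node_nest (path sg (j + t)) (sg (j + t)%nat). rewrite /V in IH *.
change (path sg (j + t).+1) with (sg (j + t)%nat :: path sg (j + t)). lra.
Qed.

Lemma UV sg j k : U sg j <= V sg k.
Proof.
have H1 := U_mono sg j k. have H2 := V_mono sg k j. rewrite (addnC k j) in H2.
have := node_lt (path sg (j + k)). rewrite /U /V in H1 H2 *. lra.
Qed.

Lemma Yset_bound sg : bound (fun r => exists k, r = U sg k).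
Proof. exists (V sg 0). move=> r [k ->]. exact: UV. Qed.
Lemma Yset_ne sg : exists r, (fun r => exists k, r = U sg k) r.
Proof. exists (U sg 0), 0%nat. done. Qed.

Definition Y sg : R := proj1_sig (completeness _ (Yset_bound sg) (Yset_ne sg)).

Lemma Y_spec sg k : U sg k <= Y sg <= V sg k.
Proof.
rewrite /Y. case: completeness => y [Hy1 Hy2] /=. split.
- apply: Hy1. by exists k.
- apply: Hy2. move=> r [j ->]. exact: UV.
Qed.

Lemma Y_range sg : c <= Y sg <= d.
Proof. have := Y_spec sg 0. rewrite /U /V /=. lra. Qed.

Lemma Y_inj sg sg' : Y sg = Y sg' -> sg = sg'.
Proof.
move=> E. apply: NNPP => Hne.
have Hex : exists k, sg k != sg' k.
  apply: NNPP => Hn. apply: Hne. apply: functional_extensionality => k.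
  apply/eqP. apply: negbNE. apply/negP => H. apply: Hn. by exists k.
case: (ex_minnP Hex) => k Hk Hmin.
have Hp : forall j, (j <= k)%nat -> path sg j = path sg' j.
  elim=> [|j IH] Hj //=. rewrite IH; last by apply: ltnW.
  congr cons. apply/eqP. apply: negbNE. apply/negP => H.
  have := Hmin j H. lia.
have Hpk := Hp k (leqnn k).
have H1 := Y_spec sg k.+1. have H2 := Y_spec sg' k.+1.
rewrite /U /V in H1 H2.
change (path sg k.+1) with (sg k :: path sg k) in H1.
change (path sg' k.+1) with (sg' k :: path sg' k) in H2.
rewrite Hpk in H1.
move: Hk. case Eb: (sg k); case Eb': (sg' k) => // _.
- rewrite Eb in H1. rewrite Eb' in H2. have := node_sep (path sg' k). lra.
- rewrite Eb in H1. rewrite Eb' in H2. have := node_sep (path sg' k). lra.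
Qed.

Definition Xpt (sg : nat -> bool) : Rn n :=
  proj1_sig (constructive_indefinite_description _ (Honto (Y_range sg))).

Lemma Xpt_spec sg : S (Xpt sg) /\ f (Xpt sg) = Y sg.
Proof. rewrite /Xpt. by case: constructive_indefinite_description. Qed.

Lemma Xpt_Cset sg : Cset (Xpt sg).
Proof.
move=> m. have [HS Hf] := Xpt_spec sg.
have Hcov := @node_covers (path sg m) (sg m).
have Hy := Y_spec sg m.+1. rewrite /U /V in Hy.
change (path sg m.+1) with (sg m :: path sg m) in Hy.
have [k [Hk Hb]] := Hcov (Xpt sg) HS ltac:(rewrite Hf; lra).
have HIn : List.In (nth (dflt n) (nB (node (sg m :: path sg m))) k) (lev m).
  apply: In_flatten; last exact: nth_In.
  have := blists_In (sg m :: path sg m). by rewrite /= size_path.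
have [k' [Hk' E]] := In_nth HIn. exists k'. by rewrite E.
Qed.

Lemma Xpt_inj sg sg' : Xpt sg = Xpt sg' -> sg = sg'.
Proof.
move=> E. apply: Y_inj. have [_ H1] := Xpt_spec sg. have [_ H2] := Xpt_spec sg'.
by rewrite -H1 -H2 E.
Qed.
Lemma cantor_sec :
  exists cc (h : R -> Rn n), (forall r s, h r = h s -> r = s) /\ (forall r, S (h r)) /\ (forall r, @Cs n cc (h r)).
Proof.
have [cc [Ha [Hb HK]]] := @data_surj n (fun m k => (nth (dflt n) (lev m) k).1)
   (fun m k => (nth (dflt n) (lev m) k).2) (fun m => size (lev m)).
have Heq : forall x, Craw (dataOf cc) x <-> Cset x.
  move=> x. rewrite /Craw /Cset. split=> H m; have [k Hk] := H m; exists k;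
    by rewrite ?Ha ?Hb ?HK in Hk *.
exists cc, (fun r => Xpt (iota_R r)). split; [|split].
- move=> r s E. apply: iota_R_inj. exact: Xpt_inj E.
- move=> r. by have [] := Xpt_spec (iota_R r).
- move=> r. split.
  + apply: (null_sub (Y := Cset)). move=> x /Heq //. exact: Cset_null.
  + apply/Heq. exact: Xpt_Cset.
Qed.
End Tree.
Theorem corollary3p5 (n : nat) (hn : (0 < n)%nat) (hstar : hyp_star n) :
  exists A : Rn n -> Prop,
    ~ lebesgue_null A /\
    forall (S : Rn n -> Prop), (forall x, S x -> A x) ->
      forall (f : Rn n -> R) (c d : R), (c < d)%R ->
        unif_cont_on S f -> ~ maps_onto_interval S f c d.
Proof.
have [A [Acube [Anull Aprop]]] := construct hn hstar.
exists A. split=> //. move=> S HSA f c d Hcd Huc [Hr Ho].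
have Scube : forall x, S x -> cube x by move=> x Hx; apply: Acube; apply: HSA.
have [cc [h [hinj [hS hC]]]] := @cantor_sec n S f c d hn Scube Huc Hcd Ho.
exact: (Aprop cc h hinj (fun r => HSA _ (hS r)) hC).
Qed.
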